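(* Let $s\ge1$, let $q$ be a prime power, let $C^{(1)},\ldots,C^{(s)}\in\mathbb{F}_q^{\mathbb{N}\times\mathbb{N}_0}$ be finite-row generating matrices and let $\mathbf{T}:\mathbb{N}_0\to\mathbb{N}_0$ with $\mathbf{T}(m)\le m$. If $C^{(1)},\ldots,C^{(s)}$ generate a $(\mathbf{T},s)$-sequence in base $q$ via Algorithm 1 (for some admissible choice of the bijections), then, for every choice of bijections $\psi_r,\lambda_{i,j}$, Algorithm 2 with the same matrices and the input sequence $s_n=(-1)^n\lfloor (n+1)/2\rfloor$ ($n\ge0$), viewed in $\mathbb{Z}_q$, produces a sequence $(\boldsymbol{x}_n)_{n\ge0}$ such that both subsequences $(\boldsymbol{x}_{2n})_{n\ge0}$ and $(\boldsymbol{x}_{2n+1})_{n\ge0}$ are $(\mathbf{T},s)$-sequences in base $q$.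
   Context: $\mathbb{F}_q$ is the finite field with $q$ elements, $D_q=\{0,\ldots,q-1\}$; $\mathbb{Z}_q$ is the ring of $q$-adic integers, each $z\in\mathbb{Z}_q$ having a unique representation $z=\sum_{r\ge0}a_rq^r$, $a_r\in D_q$. A matrix $(c^{(i)}_{j,r})_{j\ge1,r\ge0}$ is finite-row if each row has finitely many nonzero entries. Algorithm 2: choose bijections $\psi_r:D_q\to\mathbb{F}_q$ ($r\ge0$), finite-row matrices $C^{(i)}=(c^{(i)}_{j,r})$, bijections $\lambda_{i,j}:\mathbb{F}_q\to D_q$ and $(s_n)$ in $\mathbb{Z}_q$; with $s_n=\sum_ra_rq^r$ put $x_n^{(i)}=\sum_{j\ge1}\lambda_{i,j}(\sum_rc^{(i)}_{j,r}\psi_r(a_r))q^{-j}$, $\boldsymbol{x}_n=(x_n^{(1)},\ldots,x_n^{(s)})$. Algorithm 1 is the same with $s_n=n$ and $\psi_r(0)=0$ for all large $r$. The $m$-digit truncation $[x_n^{(i)}]_{q,m}=\sum_{j=1}^m\lambda_{i,j}(\cdots)q^{-j}$, applied coordinatewise. Elementary interval in base $q$: $\prod_i[a_iq^{-d_i},(a_i+1)q^{-d_i})$, $d_i\ge0$, $0\le a_i<q^{d_i}$. For $0\le t\le m$, a $(t,m,s)$-net in base $q$ is a set of $q^m$ points in $[0,1)^s$ with exactly $q^t$ points in every elementary interval of volume $q^{t-m}$. A sequence $(\boldsymbol{y}_n)$ is a $(\mathbf{T},s)$-sequence in base $q$ if for all $k\ge0$ and $m$ with $\mathbf{T}(m)<m$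 the points $[\boldsymbol{y}_n]_{q,m}$, $kq^m\le n<(k+1)q^m$, form a $(\mathbf{T}(m),m,s)$-net in base $q$. *)

(* Defs.v *)
From HB Require Import structures.
From mathcomp Require Import all_boot all_order all_algebra.
Set Implicit Arguments. Unset Strict Implicit. Unset Printing Implicit Defensive.
Import Order.TTheory GRing.Theory Num.Theory.
Local Open Scope ring_scope.

(* Base field F = F_q with q := #|F| (a finite field; q is automatically a
   prime power).  Digit set D_q = {0,...,q-1} is the ordinal type 'I_#|F|. *)

Lemma card_F_gt0 (F : finFieldType) : (0 < #|F|)%N.
Proof. by apply/card_gt0P; exists 0. Qed.

Definition ord_q (F : finFieldType) (x : nat) : 'I_#|F| :=
  Ordinal (ltn_pmod x (card_F_gt0 F)).

(* A q-adic integer is represented by its (unique) digit sequence r |-> a_r.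
   The q-adic expansion of an ordinary integer z: a_r = floor(z / q^r) mod q. *)
Definition qadic_of_int (F : finFieldType) (z : int) : nat -> 'I_#|F| :=
  fun r => ord_q F (absz (intdiv.modz (intdiv.divz z (#|F| ^ r)%N%:Z) (#|F|)%:Z)).

(* Finite-row generating matrices: C i j is row j (j >= 1) of C^(i+1), given
   as a finite list; c_{j,r} = nth 0 (C i j) r (zero beyond the list). *)
Definition entry (F : finFieldType) (row : seq F) (r : nat) : F := nth 0 row r.

(* j-th digit (j >= 1) of coordinate i of the point produced from the q-adic
   integer with digits a, by Algorithm 2 with data (psi, C, lam). *)
Definition alg_digit (F : finFieldType) (s : nat) (C : 'I_s -> nat -> seq F)
  (psi : nat -> 'I_#|F| -> F) (lam : 'I_s -> nat -> F -> 'I_#|F|)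
  (a : nat -> 'I_#|F|) (i : 'I_s) (j : nat) : 'I_#|F| :=
  lam i j (\sum_(r < size (C i j)) entry (C i j) r * psi r (a r)).

Definition alg_trunc (F : finFieldType) (s : nat) (C : 'I_s -> nat -> seq F)
  (psi : nat -> 'I_#|F| -> F) (lam : 'I_s -> nat -> F -> 'I_#|F|)
  (a : nat -> 'I_#|F|) (m : nat) (i : 'I_s) : rat :=
  \sum_(1 <= j < m.+1) (alg_digit C psi lam a i j : nat)%:R / (#|F| ^ j)%N%:R.

Definition in_elem_interval (s q : nat) (d a : 'I_s -> nat) (x : 'I_s -> rat)
  : bool :=
  [forall i, ((a i)%:R / (q ^ d i)%N%:R <= x i)
             && (x i < (a i).+1%:R / (q ^ d i)%N%:R)].

Definition is_net (s q t m : nat) (P : 'I_(q ^ m) -> 'I_s -> rat) : Prop :=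
  (t <= m)%N /\
  (forall n i, 0 <= P n i < 1) /\
  (forall d a : 'I_s -> nat, (\sum_i d i)%N = (m - t)%N ->
     (forall i, (a i < q ^ d i)%N) ->
     #|[set n : 'I_(q ^ m) | in_elem_interval q d a (P n)]| = (q ^ t)%N).

(* (T,s)-sequence in base q; P m n is the m-digit truncation [y_n]_{q,m}. *)
Definition is_TS_seq (s q : nat) (T : nat -> nat)
  (P : nat -> nat -> 'I_s -> rat) : Prop :=
  forall k m : nat, (T m < m)%N ->
    @is_net s q (T m) m (fun n : 'I_(q ^ m) => P m (k * q ^ m + n)%N).

Definition alt_seq (n : nat) : int := (-1) ^+ n * ((n.+1)./2)%:Z.

(* Main.v *)
Require Import Defs.
From HB Require Import structures.
From mathcomp Require Import all_boot all_order all_algebra.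
From mathcomp Require Import zify ring lra.
Set Implicit Arguments. Unset Strict Implicit. Unset Printing Implicit Defensive.
Import Order.TTheory GRing.Theory Num.Theory.

Fixpoint hn (Q d : nat) (f : nat -> nat) : nat :=
  if d is d'.+1 then hn Q d' f * Q + f d else 0.

Lemma hn_ext Q d f g : (forall j, 0 < j <= d -> f j = g j) -> hn Q d f = hn Q d g.
Proof.
elim: d => //= d IH H; rewrite IH ?H //; first by rewrite ltnSn.
by move=> j /andP[j0 jd]; apply: H; rewrite j0 (leq_trans jd).
Qed.

Lemma hn_bound Q d f : (forall j, f j < Q) -> hn Q d f < Q ^ d.
Proof.
move=> Hf; elim: d => [|d IH] /=; first by rewrite expn0.
have := Hf d.+1; rewrite expnS; nia.
Qed.

Lemma hn_inj Q d f g : (forall j, f j < Q) -> (forall j, g j < Q) ->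
  hn Q d f = hn Q d g -> forall j, 0 < j <= d -> f j = g j.
Proof.
move=> Hf Hg; elim: d => [|d IH] /=; first by move=> _ j; case: j.
have Q0 : 0 < Q by apply: leq_ltn_trans (Hf 0).
move=> E.
have E1 : f d.+1 = g d.+1.
  by move: (congr1 (modn^~ Q) E); rewrite !modnMDl !modn_small.
have E2 : hn Q d f = hn Q d g.
  by move: (congr1 (divn^~ Q) E); rewrite !divnMDl // !divn_small // !addn0.
move=> j /andP[j0]; rewrite leq_eqVlt => /orP[/eqP->//|]; rewrite ltnS => jd.
by apply: IH; rewrite ?j0.
Qed.

Lemma hn_exists Q d a : 0 < Q -> a < Q ^ d ->
  hn Q d (fun j => (a %/ Q ^ (d - j)) %% Q) = a.
Proof.
move=> Q0; elim: d a => [|d IH] a /=; first by rewrite expn0 ltnS leqn0 => /eqP->.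
move=> Ha.
have Ha' : a %/ Q < Q ^ d by rewrite ltn_divLR // -expnSr.
rewrite subnn expn0 divn1.
rewrite (@hn_ext Q d _ (fun j => ((a %/ Q) %/ Q ^ (d - j)) %% Q)); last first.
  move=> j /andP[_ jd]; by rewrite subSn // expnS divnMA.
by rewrite IH // [in RHS](divn_eq a Q).
Qed.

Lemma hn_split Q d e f : hn Q (d + e) f = hn Q d f * Q ^ e + hn Q e (fun j => f (d + j)).
Proof.
elim: e => [|e IH] /=; first by rewrite addn0 expn0 muln1 addn0.
by rewrite addnS /= IH expnSr mulnDl -mulnA addnA.
Qed.
Lemma dg_low Q k m n r : 0 < Q -> r < m ->
  ((k * Q ^ m + n) %/ Q ^ r) %% Q = (n %/ Q ^ r) %% Q.
Proof.
move=> Q0 rm.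
have Qr : 0 < Q ^ r by rewrite expn_gt0 Q0.
have -> : Q ^ m = Q ^ (m - r) * Q ^ r by rewrite -expnD subnK // ltnW.
rewrite mulnA divnMDl //.
have mr0 : 0 < m - r by rewrite subn_gt0.
by rewrite -(prednK mr0) expnSr mulnA modnMDl.
Qed.

Lemma dg_high Q k m n r : 0 < Q -> n < Q ^ m -> m <= r ->
  (k * Q ^ m + n) %/ Q ^ r = k %/ Q ^ (r - m).
Proof.
move=> Q0 nm mr.
by rewrite -(subnKC mr) expnD divnMA divnMDl ?expn_gt0 ?Q0 // (divn_small nm) addn0 addKn.
Qed.

Lemma dg_inj Q m n n' : 0 < Q -> n < Q ^ m -> n' < Q ^ m ->
  (forall r, r < m -> (n %/ Q ^ r) %% Q = (n' %/ Q ^ r) %% Q) -> n = n'.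
Proof.
move=> Q0; elim: m n n' => [|m IH] n n'.
  by rewrite expn0 !ltnS !leqn0 => /eqP-> /eqP->.
move=> hn hn' H.
rewrite (divn_eq n Q) (divn_eq n' Q).
have := H 0 (ltn0Sn _); rewrite expn0 !divn1 => ->.
congr (_ * _ + _); apply: IH.
- by rewrite ltn_divLR // -expnSr.
- by rewrite ltn_divLR // -expnSr.
move=> r rm; rewrite -!divnMA -expnS; exact: H.
Qed.
Local Open Scope ring_scope.
Lemma trunc_hn (Q m : nat) (f : nat -> nat) : (0 < Q)%N ->
  \sum_(1 <= j < m.+1) (f j)%:R / (Q ^ j)%N%:R = (hn Q m f)%:R / (Q ^ m)%N%:R :> rat.
Proof.
move=> Q0; elim: m => [|m IH]; first by rewrite big_geq // mul0r.
rewrite big_nat_recr //= IH.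
have Qm : (Q ^ m)%N%:R != 0 :> rat by rewrite pnatr_eq0 -lt0n expn_gt0 Q0.
have Qn : Q%:R != 0 :> rat by rewrite pnatr_eq0 -lt0n.
rewrite expnSr !natrM natrD natrM; field.
by rewrite Qm Qn.
Qed.

Lemma rat_le_div (a b x y : nat) : (0 < x)%N -> (0 < y)%N ->
  (a%:R / x%:R <= b%:R / y%:R :> rat) = (a * y <= b * x)%N.
Proof.
move=> x0 y0.
rewrite ler_pdivrMr ?ltr0n // mulrAC ler_pdivlMr ?ltr0n //.
by rewrite -!natrM ler_nat.
Qed.

Lemma rat_lt_div (a b x y : nat) : (0 < x)%N -> (0 < y)%N ->
  (a%:R / x%:R < b%:R / y%:R :> rat) = (a * y < b * x)%N.
Proof.
move=> x0 y0.
rewrite ltr_pdivrMr ?ltr0n // mulrAC ltr_pdivlMr ?ltr0n //.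
by rewrite -!natrM ltr_nat.
Qed.

Lemma interval_iff (Q d m a : nat) (f : nat -> nat) : (0 < Q)%N ->
  (forall j, f j < Q)%N -> (d <= m)%N ->
  ((a%:R / (Q ^ d)%N%:R <= (hn Q m f)%:R / (Q ^ m)%N%:R :> rat) &&
   ((hn Q m f)%:R / (Q ^ m)%N%:R < (a.+1)%:R / (Q ^ d)%N%:R :> rat)) = (hn Q d f == a).
Proof.
move=> Q0 Hf dm.
have Qp k : (0 < Q ^ k)%N by rewrite expn_gt0 Q0.
rewrite rat_le_div // rat_lt_div //.
rewrite -(subnKC dm) hn_split expnD.
have := @hn_bound Q (m - d) (fun j => f (d + j)) (fun j => Hf _).
have := Qp d; have := Qp (m - d)%N.
set E := (Q ^ (m - d))%N; set D := (Q ^ d)%N; set h := hn Q d f; set R := hn Q _ _.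
move=> E0 D0 RE.
apply/idP/eqP.
  move=> /andP[H1 H2].
  have H1' : (a * E <= h * E + R)%N by rewrite mulnC -[X in (_ <= X)%N](@mulnK _ D) //; nia.
  nia.
move=> <-; apply/andP; split; nia.
Qed.
Lemma alt_even n : alt_seq (2 * n)%N = n%:Z.
Proof.
rewrite /alt_seq mulnC exprM sqrr_sign mul1r; congr Posz.
by rewrite mulnC mul2n; exact: (half_bit_double n true).
Qed.

Lemma alt_odd n : alt_seq (2 * n).+1 = Negz n.
Proof.
rewrite /alt_seq exprS mulnC exprM sqrr_sign mulr1 NegzE mulN1r; congr (- Posz _).
by rewrite mulnC mul2n -doubleS doubleK.
Qed.

Lemma qadic_nat (F : finFieldType) (N r : nat) :
  nat_of_ord (qadic_of_int F N%:Z r) = ((N %/ #|F| ^ r) %% #|F|)%N.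
Proof.
by rewrite /qadic_of_int /ord_q /= divz_nat modz_nat /= modn_mod.
Qed.

Lemma qadic_neg (F : finFieldType) (N r : nat) :
  nat_of_ord (qadic_of_int F (Negz N) r) = (#|F|.-1 - (N %/ #|F| ^ r) %% #|F|)%N.
Proof.
have Q0 := card_F_gt0 F.
rewrite /qadic_of_int /ord_q /= divNz_nat ?expn_gt0 ?Q0 // -NegzE modNz_nat //.
have := ltn_pmod (N %/ #|F| ^ r) Q0.
set x := ((N %/ _) %% _)%N => hx; rewrite -subn1; clearbody x.
have -> : (#|F|%:Z - 1 - x%:Z) = ((#|F| - 1 - x)%N)%:Z by lia.
by rewrite absz_nat modn_small // -subnDA ltn_subrL Q0 andbT add1n.
Qed.
Definition Lfun (F : finFieldType) (s : nat) (C : 'I_s -> nat -> seq F) (m : nat)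
  (i : 'I_s) (j : nat) (v : {ffun 'I_m -> F}) : F :=
  \sum_(r < m) entry (C i j) r * v r.

Definition Efun (F : finFieldType) (s : nat) (C : 'I_s -> nat -> seq F)
  (psi : nat -> 'I_#|F| -> F) (A0 : nat -> 'I_#|F|) (m : nat) (i : 'I_s) (j : nat) : F :=
  \sum_(m <= r < size (C i j) + m) entry (C i j) r * psi r (A0 r).

Definition phiv (F : finFieldType) (psi : nat -> 'I_#|F| -> F) (m : nat)
  (a : nat -> 'I_#|F|) : {ffun 'I_m -> F} := [ffun r : 'I_m => psi r (a r)].

Lemma alg_digit_split (F : finFieldType) (s : nat) (C : 'I_s -> nat -> seq F)
  psi lam m (a A0 : nat -> 'I_#|F|) i j :
  (forall r, (m <= r)%N -> a r = A0 r) ->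
  alg_digit C psi lam a i j = lam i j (Lfun C i j (phiv psi m a) + Efun C psi A0 m i j).
Proof.
move=> HA; rewrite /alg_digit; congr (lam i j _).
set g := fun r => entry (C i j) r * psi r (a r).
rewrite -(big_mkord xpredT g).
have -> : \sum_(0 <= r < size (C i j)) g r = \sum_(0 <= r < size (C i j) + m) g r.
  rewrite [RHS](big_cat_nat (leq0n (size (C i j))) (leq_addr m _)) /=.
  rewrite [X in _ = _ + X]big1_seq ?addr0 // => r /andP[_].
  rewrite mem_index_iota => /andP[hr _].
  by rewrite /g /entry nth_default // mul0r.
rewrite (big_cat_nat (leq0n m) (leq_addl _ m)) /=.
congr (_ + _).
  rewrite big_mkord /Lfun; apply: eq_bigr => r _; by rewrite ffunE.
rewrite /Efun; apply: eq_big_nat => r /andP[mr _]; by rewrite /g HA.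
Qed.

Lemma mem_interval (F : finFieldType) (s : nat) (C : 'I_s -> nat -> seq F)
  psi lam m (a A0 : nat -> 'I_#|F|) (d b : 'I_s -> nat) :
  (forall r, (m <= r)%N -> a r = A0 r) -> (forall i, (d i <= m)%N) ->
  in_elem_interval #|F| d b (alg_trunc C psi lam a m) =
  [forall i, hn #|F| (d i) (fun j => lam i j (Lfun C i j (phiv psi m a) + Efun C psi A0 m i j)) == b i].
Proof.
move=> HA Hd; have Q0 := card_F_gt0 F.
apply: eq_forallb => i; rewrite /alg_trunc.
rewrite (trunc_hn _ _ Q0) (interval_iff (b i) Q0) ?Hd //.
congr (_ == _); apply: hn_ext => j _.
by rewrite (alg_digit_split C psi lam i j HA).
Qed.

Lemma count_bij (F : finFieldType) m (phi : 'I_(#|F| ^ m) -> {ffun 'I_m -> F})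
  (p : pred {ffun 'I_m -> F}) : injective phi ->
  #|[set n | p (phi n)]| = #|[set v | p v]|.
Proof.
move=> inj.
have [g fg gf] : bijective phi.
  by apply: inj_card_bij => //; rewrite card_ord card_ffun card_ord.
rewrite -(card_imset _ inj); apply: eq_card => v; rewrite [in RHS]inE.
apply/imsetP/idP => [[n]|pv]; first by rewrite inE => pn ->.
by exists (g v); rewrite ?inE gf.
Qed.

Definition Mset (F : finFieldType) (s : nat) (C : 'I_s -> nat -> seq F) (m : nat)
  (d : 'I_s -> nat) (y : 'I_s -> nat -> F) : {set {ffun 'I_m -> F}} :=
  [set v | [forall i, forall j : 'I_m, ((j < d i)%N) ==> (Lfun C i j.+1 v == y i j.+1)]].

Lemma Mset_P (F : finFieldType) (s : nat) (C : 'I_s -> nat -> seq F) (m : nat)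
  (d : 'I_s -> nat) y v : (forall i, (d i <= m)%N) ->
  reflect (forall i j, (0 < j <= d i)%N -> Lfun C i j v = y i j) (v \in Mset C m d y).
Proof.
move=> Hd; rewrite inE; apply: (iffP forallP) => H i.
  move=> j /andP[j0 jd].
  have jm : (j.-1 < m)%N by rewrite prednK // (leq_trans jd (Hd i)).
  have := forallP (H i) (Ordinal jm); rewrite /= prednK // jd /= => /eqP; done.
apply/forallP => j; apply/implyP => jd; apply/eqP; exact: H.
Qed.

Lemma from_hyp (F : finFieldType) (s : nat) (C : 'I_s -> nat -> seq F) (m t : nat)
  (d : 'I_s -> nat) (lam1 : 'I_s -> nat -> F -> 'I_#|F|) (E1 : 'I_s -> nat -> F) :
  (forall i, (d i <= m)%N) -> (forall i j, injective (lam1 i j)) ->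
  (forall b : 'I_s -> nat, (forall i, (b i < #|F| ^ d i)%N) ->
     #|[set v : {ffun 'I_m -> F} |
        [forall i, hn #|F| (d i) (fun j => lam1 i j (Lfun C i j v + E1 i j)) == b i]]|
     = (#|F| ^ t)%N) ->
  forall y, #|Mset C m d y| = (#|F| ^ t)%N.
Proof.
move=> Hd Hlam H y.
pose b i := hn #|F| (d i) (fun j => lam1 i j (y i j + E1 i j)).
rewrite -(H b); last by move=> i; apply: hn_bound => j; exact: ltn_ord.
apply: eq_card => v; rewrite [in RHS]inE.
apply/(Mset_P _ _ _ Hd)/forallP => [Hv i|Hv i j jd].
  apply/eqP; apply: hn_ext => j jd; by rewrite Hv.
have := hn_inj (fun j => ltn_ord _) (fun j => ltn_ord _) (eqP (Hv i)) jd.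
by move=> /val_inj /Hlam /addIr.
Qed.

Lemma to_concl (F : finFieldType) (s : nat) (C : 'I_s -> nat -> seq F) (m t : nat)
  (d : 'I_s -> nat) (lam : 'I_s -> nat -> F -> 'I_#|F|) (E : 'I_s -> nat -> F) :
  (forall i, (d i <= m)%N) -> (forall i j, bijective (lam i j)) ->
  (forall y, #|Mset C m d y| = (#|F| ^ t)%N) ->
  forall b : 'I_s -> nat, (forall i, (b i < #|F| ^ d i)%N) ->
     #|[set v : {ffun 'I_m -> F} |
        [forall i, hn #|F| (d i) (fun j => lam i j (Lfun C i j v + E i j)) == b i]]|
     = (#|F| ^ t)%N.
Proof.
move=> Hd Hlam H b Hb.
have Q0 := card_F_gt0 F.
pose dl i j := ((b i %/ #|F| ^ (d i - j)) %% #|F|)%N.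
have dlQ i j : (dl i j < #|F|)%N by apply: ltn_pmod.
have ex i j : exists x, lam i j x == ord_q F (dl i j).
  by have [g _ gK] := Hlam i j; exists (g (ord_q F (dl i j))); rewrite gK.
pose y i j := xchoose (ex i j) - E i j.
have yP i j : nat_of_ord (lam i j (y i j + E i j)) = dl i j.
  by rewrite /y subrK (eqP (xchooseP (ex i j))) /= modn_small.
rewrite -(H y); apply: eq_card => v; rewrite [in LHS]inE.
have hb i : hn #|F| (d i) (dl i) = b i by apply: hn_exists.
apply/forallP/(Mset_P _ _ _ Hd) => [Hv i j jd|Hv i].
  have E1 : hn #|F| (d i) (fun j => lam i j (Lfun C i j v + E i j)) = hn #|F| (d i) (dl i).
    by rewrite hb; apply/eqP; exact: Hv i.
  have := hn_inj (fun j => ltn_ord _) (dlQ i) E1 jd.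
  rewrite -yP => /val_inj.
  by case: (Hlam i j) => g gK _ => /(can_inj gK) /addIr.
rewrite -(hb i); apply/eqP; apply: hn_ext => j jd; by rewrite Hv ?yP.
Qed.

Definition block_ok (F : finFieldType) (m : nat) (A : 'I_(#|F| ^ m) -> nat -> 'I_#|F|)
  (A0 : nat -> 'I_#|F|) : Prop :=
  (forall n r, (m <= r)%N -> A n r = A0 r) /\
  injective (fun n => [ffun r : 'I_m => A n r]).

Lemma count_block (F : finFieldType) (s : nat) (C : 'I_s -> nat -> seq F)
  psi lam m A A0 (d b : 'I_s -> nat) :
  (forall r, injective (psi r)) -> @block_ok F m A A0 -> (forall i, (d i <= m)%N) ->
  #|[set n | in_elem_interval #|F| d b (alg_trunc C psi lam (A n) m)]| =
  #|[set v : {ffun 'I_m -> F} |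
     [forall i, hn #|F| (d i) (fun j => lam i j (Lfun C i j v + Efun C psi A0 m i j)) == b i]]|.
Proof.
move=> Hpsi [HA Hinj] Hd.
rewrite -(@count_bij F m (fun n => phiv psi m (A n))); last first.
  move=> n n' /ffunP E; apply: Hinj; apply/ffunP => r; rewrite !ffunE.
  by apply: (Hpsi r); have := E r; rewrite !ffunE.
apply: eq_card => n; rewrite !inE.
by rewrite (mem_interval _ _ _ _ (HA n)).
Qed.

Lemma block_nat (F : finFieldType) m k :
  @block_ok F m (fun n => qadic_of_int F ((k * #|F| ^ m + n)%N)%:Z)
    (fun r => qadic_of_int F ((k * #|F| ^ m + 0)%N)%:Z r).
Proof.
have Q0 := card_F_gt0 F.
have Qm : (0 < #|F| ^ m)%N by rewrite expn_gt0 Q0.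
split.
  move=> n r mr; apply: ord_inj; rewrite !qadic_nat !dg_high //.
move=> n n' /ffunP E; apply: val_inj.
apply: (dg_inj Q0 (ltn_ord n) (ltn_ord n')) => r rm.
have := E (Ordinal rm); rewrite !ffunE => /(congr1 (@nat_of_ord _)).
by rewrite !qadic_nat !dg_low.
Qed.

Lemma block_even (F : finFieldType) m k :
  @block_ok F m (fun n => qadic_of_int F (alt_seq (2 * (k * #|F| ^ m + n))%N))
    (fun r => qadic_of_int F ((k * #|F| ^ m + 0)%N)%:Z r).
Proof.
have [H1 H2] := block_nat F m k.
split => [n r|n n']; rewrite !alt_even; [exact: H1 | exact: H2].
Qed.

Lemma block_odd (F : finFieldType) m k :
  @block_ok F m (fun n => qadic_of_int F (alt_seq (2 * (k * #|F| ^ m + n))%N.+1))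
    (fun r => qadic_of_int F (Negz (k * #|F| ^ m + 0)%N) r).
Proof.
have Q0 := card_F_gt0 F.
have Qm : (0 < #|F| ^ m)%N by rewrite expn_gt0 Q0.
split.
  move=> n r mr; apply: ord_inj; rewrite !alt_odd !qadic_neg !dg_high //.
move=> n n'; rewrite !alt_odd => /ffunP E; apply: ord_inj.
apply: (dg_inj Q0 (ltn_ord n) (ltn_ord n')) => r rm.
have := E (Ordinal rm); rewrite !ffunE => /(congr1 (@nat_of_ord _)).
rewrite !qadic_neg !dg_low //.
have := ltn_pmod (n %/ #|F| ^ r) Q0; have := ltn_pmod (n' %/ #|F| ^ r) Q0.
set x := (_ %% _)%N; set x' := (_ %% _)%N; clearbody x x'.
move: Q0; set q := #|F|; clearbody q; lia.
Qed.

Lemma d_le (s m t : nat) (d : 'I_s -> nat) :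
  (\sum_i d i)%N = (m - t)%N -> forall i, (d i <= m)%N.
Proof.
move=> Hs i; apply: (leq_trans _ (leq_subr t m)); rewrite -Hs.
by rewrite (bigD1 i) //= leq_addr.
Qed.

Lemma net_block (F : finFieldType) (s : nat) (C : 'I_s -> nat -> seq F)
  psi lam m t A A0 :
  (forall r, injective (psi r)) -> (forall i j, bijective (lam i j)) ->
  @block_ok F m A A0 -> (t <= m)%N ->
  (forall d : 'I_s -> nat, (\sum_i d i)%N = (m - t)%N ->
     forall y, #|Mset C m d y| = (#|F| ^ t)%N) ->
  @is_net s #|F| t m (fun n => alg_trunc C psi lam (A n) m).
Proof.
move=> Hpsi Hlam Hblk tm HM.
have Q0 := card_F_gt0 F.
split => //; split.
  move=> n i; rewrite /alg_trunc (trunc_hn _ _ Q0).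
  have Qm : (0 < #|F| ^ m)%N by rewrite expn_gt0 Q0.
  rewrite divr_ge0 ?ler0n //= ltr_pdivrMr ?ltr0n // mul1r ltr_nat.
  by apply: hn_bound => j; exact: ltn_ord.
move=> d b Hs Hb.
have Hd := d_le Hs.
rewrite (count_block C lam b Hpsi Hblk Hd).
exact: (to_concl _ Hd Hlam (HM d Hs) Hb).
Qed.

Unset Implicit Arguments.

Theorem corollary1 (F : finFieldType) (s : nat) (C : 'I_s -> nat -> seq F)
  (T : nat -> nat) :
  (1 <= s)%N ->
  (forall m, (T m <= m)%N) ->
  (* C generates a (T,s)-sequence via Algorithm 1 for some admissible bijections *)
  (exists (psi1 : nat -> 'I_#|F| -> F) (lam1 : 'I_s -> nat -> F -> 'I_#|F|),
     (forall r, bijective (psi1 r)) /\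
     (exists R, forall r, (R <= r)%N -> psi1 r (ord_q F 0) = 0) /\
     (forall i j, bijective (lam1 i j)) /\
     is_TS_seq #|F| T (fun m n => alg_trunc C psi1 lam1 (qadic_of_int F n%:Z) m)) ->
  forall (psi : nat -> 'I_#|F| -> F) (lam : 'I_s -> nat -> F -> 'I_#|F|),
    (forall r, bijective (psi r)) ->
    (forall i j, bijective (lam i j)) ->
    is_TS_seq #|F| T
      (fun m n => alg_trunc C psi lam (qadic_of_int F (alt_seq (2 * n)%N)) m) /\
    is_TS_seq #|F| T
      (fun m n => alg_trunc C psi lam (qadic_of_int F (alt_seq (2 * n).+1)) m).
Proof.
move=> _ HT [psi1 [lam1 [Hpsi1 [_ [Hlam1 Hseq]]]]] psi lam Hpsi Hlam.
have Hpsi1' r : injective (psi1 r) := bij_inj (Hpsi1 r).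
have Hpsi' r : injective (psi r) := bij_inj (Hpsi r).
have HM m : (T m < m)%N -> forall d : 'I_s -> nat, (\sum_i d i)%N = (m - T m)%N ->
    forall y, #|Mset C m d y| = (#|F| ^ T m)%N.
  move=> Tm d Hs; have Hd := d_le Hs.
  apply: (from_hyp (lam1 := lam1)
    (E1 := Efun C psi1 (fun r => qadic_of_int F ((0 * #|F| ^ m + 0)%N)%:Z r) m) Hd
    (fun i j => bij_inj (Hlam1 i j))).
  move=> b Hb.
  rewrite -(count_block C lam1 b Hpsi1' (block_nat F m 0) Hd).
  by have [_ [_ H3]] := Hseq 0%N m Tm; exact: H3.
split => k m Tm.
  exact: (@net_block F s C psi lam m (T m) _ _ Hpsi' Hlam (block_even F m k) (HT m) (HM m Tm)).
exact: (@net_block F s C psi lam m (T m) _ _ Hpsi' Hlam (block_odd F m k) (HT m) (HM m Tm)).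
Qed.
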